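(* Let $U\in\mathbb R^{n\times r}$ and $V\in\mathbb R^{T\times r}$ have orthonormal columns, and let $\mathbf T=\{UA^\top+BV^\top+a\mathbf 1^\top: A\in\mathbb R^{T\times r},B\in\mathbb R^{n\times r},a\in\mathbb R^n\}$. Let $\rho=(I-VV^\top)\mathbf 1$ and assume $\rho\ne 0$. Then the orthogonal projection onto $\mathbf T^\perp$ is, for every $X\in\mathbb R^{n\times T}$, $$P_{\mathbf T^\perp}(X)=(I-UU^\top)\,X\Big(I-\frac{\rho\rho^\top}{\|\rho\|^2}\Big)(I-VV^\top).$$
   Context: $\mathbf 1\in\mathbb R^T$ is the all-ones vector; orthogonality is with respect to the Frobenius inner product. *)

(* Defs.v *)
From HB Require Import structures.
From mathcomp Require Import all_boot all_order all_algebra.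
Set Implicit Arguments. Unset Strict Implicit. Unset Printing Implicit Defensive.
Import Order.TTheory GRing.Theory Num.Theory.
Local Open Scope ring_scope.

Definition frob (R : realFieldType) (m n : nat) (X Y : 'M[R]_(m, n)) : R :=
  \sum_(i < m) \sum_(j < n) X i j * Y i j.

Definition ones (R : realFieldType) (T : nat) : 'cV[R]_T := const_mx 1.

Definition inTspace (R : realFieldType) (n T r : nat)
  (U : 'M[R]_(n, r)) (V : 'M[R]_(T, r)) (X : 'M[R]_(n, T)) : Prop :=
  exists (A : 'M[R]_(T, r)) (B : 'M[R]_(n, r)) (a : 'cV[R]_n),
    X = U *m A^T + B *m V^T + a *m (ones R T)^T.

Definition orth_compl (R : realFieldType) (m n : nat)
  (S : 'M[R]_(m, n) -> Prop) (Y : 'M[R]_(m, n)) : Prop :=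
  forall Z, S Z -> frob Y Z = 0.

Definition is_orth_proj (R : realFieldType) (m n : nat)
  (W : 'M[R]_(m, n) -> Prop) (P : 'M[R]_(m, n) -> 'M[R]_(m, n)) : Prop :=
  forall X, W (P X) /\ orth_compl W (X - P X).

(* Main.v *)
Require Import Defs.
From HB Require Import structures.
From mathcomp Require Import all_boot all_order all_algebra.
Import Order.TTheory GRing.Theory Num.Theory.
Local Open Scope ring_scope.

Lemma frob_tr (R : realFieldType) m n (X Y : 'M[R]_(m,n)) :
  frob X Y = \tr (X *m Y^T).
Proof.
rewrite /frob /mxtrace; apply: eq_bigr => i _; rewrite !mxE.
by under [RHS]eq_bigr do rewrite mxE.
Qed.

Lemma frobC (R : realFieldType) m n (X Y : 'M[R]_(m,n)) :
  frob X Y = frob Y X.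
Proof. rewrite /frob; apply: eq_bigr => i _; apply: eq_bigr => j _; exact: mulrC. Qed.

Theorem lemma4 (R : realFieldType) (n T r : nat)
  (U : 'M[R]_(n, r)) (V : 'M[R]_(T, r))
  (hU : U^T *m U = 1%:M) (hV : V^T *m V = 1%:M) :
  let rho : 'cV[R]_T := (1%:M - V *m V^T) *m ones R T in
  rho != 0 ->
  is_orth_proj (orth_compl (inTspace U V))
    (fun X : 'M[R]_(n, T) =>
       (1%:M - U *m U^T) *m X
       *m (1%:M - ((rho^T *m rho) 0 0)^-1 *: (rho *m rho^T))
       *m (1%:M - V *m V^T)).
Proof.
move=> rho rho0 X.
set M := 1%:M - V *m V^T.
have rdef : rho = M *m ones R T by [].
clearbody rho.
have MT : M^T = M by rewrite /M linearB /= trmx1 trmx_mul trmxK.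
have MV : M *m V = 0 by rewrite /M mulmxBl mul1mx -mulmxA hV mulmx1 subrr.
have MM : M *m M = M.
  by rewrite {1}/M mulmxBl mul1mx -mulmxA -[V^T *m M]trmxK trmx_mul trmxK MT MV trmx0 mulmx0 subr0.
have Mr : M *m rho = rho by rewrite rdef mulmxA MM.
set s := (rho^T *m rho) 0 0.
have rr : rho^T *m rho = s%:M := mx11_scalar _.
have s0 : s != 0.
  have sE : s = \sum_(k < T) rho k 0 * rho k 0.
    by rewrite /s mxE; under eq_bigr do rewrite mxE.
  apply: contra rho0 => /eqP s0; apply/eqP/matrixP => i j; rewrite (ord1 j) [RHS]mxE.
  rewrite sE in s0.
  have := psumr_eq0P (fun k _ => (sqr_ge0 (rho k 0))) (etrans (eq_bigr _ (fun k _ => expr2 _)) s0).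
  by move=> /(_ i isT) /eqP; rewrite sqrf_eq0 => /eqP.
have r1 : rho^T *m ones R T = rho^T *m rho.
  by rewrite -{1}Mr trmx_mul MT -mulmxA -rdef.
set c := s^-1.
set Q := (1%:M - c *: (rho *m rho^T)) *m M.
have QV : Q *m V = 0 by rewrite -mulmxA MV mulmx0.
have Q1 : Q *m ones R T = 0.
  by rewrite -mulmxA -rdef mulmxBl mul1mx -scalemxAl -mulmxA rr mul_mx_scalar scalerA mulVf // scale1r subrr.
have QE : Q = M - c *: (rho *m rho^T).
  by rewrite /Q mulmxBl mul1mx -scalemxAl -mulmxA -[rho^T *m M]trmxK trmx_mul trmxK MT Mr.
set PU := 1%:M - U *m U^T.
have UPU : U^T *m PU = 0 by rewrite mulmxBr mulmx1 mulmxA hU mul1mx subrr.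
have PQ : PU *m X *m (1%:M - c *: (rho *m rho^T)) *m M
    = PU *m X *m Q by rewrite -!mulmxA.
have PUdef : PU = 1%:M - U *m U^T by [].
clearbody PU Q.
rewrite PQ; split.
  move=> Z [A [B [a ->]]].
  have key : Q *m (U *m A^T + B *m V^T + a *m (ones R T)^T)^T *m PU = 0.
    have ZT : (U *m A^T + B *m V^T + a *m (ones R T)^T)^T = A *m U^T + V *m B^T + ones R T *m a^T.
      by rewrite !linearD /= !trmx_mul !trmxK.
    rewrite ZT !mulmxDr !mulmxDl -!mulmxA UPU !mulmx0 add0r.
    by rewrite !mulmxA QV Q1 !mul0mx addr0.
  rewrite frob_tr -!mulmxA mxtrace_mulC.
  rewrite (_ : _ *m PU = X *m (Q *m (U *m A^T + B *m V^T + a *m (ones R T)^T)^T *m PU)).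
    by rewrite key mulmx0 linear0.
  by rewrite !mulmxA.
move=> Y HY; rewrite frobC; apply: HY.
set W := PU *m X.
exists (U^T *m X)^T, (W *m V - (c *: (W *m rho)) *m (ones R T)^T *m V), (c *: (W *m rho)).
have e1 : X - W *m Q = (X - W) + W *m (1%:M - Q) by rewrite mulmxBr mulmx1 addrA subrK.
have e2 : X - W = U *m (U^T *m X) by rewrite /W PUdef mulmxBl mul1mx opprB addrC subrK mulmxA.
have e3 : 1%:M - Q = V *m V^T + c *: (rho *m rho^T).
  by rewrite QE /M !opprD !opprK !addrA subrr add0r.
have e4 : rho^T = (ones R T)^T - (ones R T)^T *m V *m V^T.
  by rewrite rdef trmx_mul MT /M mulmxBr mulmx1 mulmxA.
rewrite e1 e2 e3 trmxK mulmxDr -scalemxAr e4 -addrA; congr (_ + _).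
rewrite mulmxBr mulmxBl mulmxBr !mulmxA -!scalemxAl.
by rewrite scalerBr addrA addrAC.
Qed.
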